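(* Let $A\in\mathbb{R}^{n\times n}$, $B\in\mathbb{R}^{n\times m}$, $C\in\mathbb{R}^{p\times n}$ with $(A,C)$ observable, $\ell$ its observability index, and $\mathbf{F}_\ell,\mathbf{L}_\ell,\mathbf{B}_\ell,Z_\ell,\mathbf{A}_\ell$ as in the context. If $\mathbf{K}\in\mathbb{R}^{m\times(p\ell+m\ell)}$ is such that $\mathbf{A}_\ell+\mathbf{B}_\ell\mathbf{K}=\mathbf{F}_\ell+\mathbf{L}_\ell Z_\ell+\mathbf{B}_\ell\mathbf{K}$ is Schur, then $(x,\chi)=0$ is globally asymptotically stable for the system $x^+=Ax+Bu$, $y=Cx$, $\chi^+=\mathbf{F}_\ell\chi+\mathbf{L}_\ell y+\mathbf{B}_\ell u$, $u=\mathbf{K}\chi$.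
   Context: A square matrix is Schur if all its eigenvalues lie in the open unit disk. The observability index $\ell$ is the smallest $l$ with $\operatorname{rank}[C;CA;\dots;CA^{l-1}]=n$. $\mathcal{O}_\ell=[C;CA;\dots;CA^{\ell-1}]$; $\mathcal{T}_\ell\in\mathbb{R}^{p\ell\times m\ell}$ block lower triangular with $(i,j)$ block $CA^{i-j-1}B$ if $i>j$ and $0$ otherwise; $\mathcal{R}_\ell=[A^{\ell-1}B\ \cdots\ AB\ B]$; $\mathcal{O}_\ell^{L}$ a fixed left inverse of $\mathcal{O}_\ell$. $\mathbf{F}_\ell=\mathrm{blockdiag}(S_p,S_m)$, $S_q\in\mathbb{R}^{q\ell\times q\ell}$ with blocks $I_q$ at block positions $(i,i+1)$, $i=1,\dots,\ell-1$, zeros elsewhere; $\mathbf{L}_\ell\in\mathbb{R}^{(p\ell+m\ell)\times p}$ with $I_p$ in rows $p\ell-p+1,\dots,p\ell$, zeros elsewhere; $\mathbf{B}_\ell\in\mathbb{R}^{(p\ell+m\ell)\times m}$ with $I_m$ in its last $m$ rows, zeros elsewhere. $Z_\ell=[CA^\ell\mathcal{O}_\ell^L\ \ C\mathcal{R}_\ell-CA^\ell\mathcal{O}_\ell^L\mathcal{T}_\ell]$, $\mathbf{A}_\ell=\mathbf{F}_\ell+\mathbf{L}_\ell Z_\ell$. *)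

(* Defs.v *)
From HB Require Import structures.
From mathcomp Require Import all_boot all_order all_algebra.
From mathcomp Require Import all_classical all_reals all_analysis.
From mathcomp Require Import complex.
Set Implicit Arguments. Unset Strict Implicit. Unset Printing Implicit Defensive.
Import Order.TTheory GRing.Theory Num.Theory.
Import numFieldNormedType.Exports.
Local Open Scope ring_scope.

Section Defs.
Variable R : realType.

(* entry (r, c) of M, or 0 if out of range *)
Definition mxget (p q : nat) (M : 'M[R]_(p, q)) (r c : nat) : R :=
  match @insub _ (fun k => k < p)%N _ r, @insub _ (fun k => k < q)%N _ c with
  | Some i, Some j => M i j
  | _, _ => 0
  end.

(* l x l block matrix with p x q blocks Blk i j (0-indexed block positions) *)
Definition blockmx (p q l : nat) (Blk : nat -> nat -> 'M[R]_(p, q))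
  : 'M[R]_(p * l, q * l) :=
  \matrix_(i < p * l, j < q * l)
     mxget (Blk (i %/ p)%N (j %/ q)%N) (i %% p)%N (j %% q)%N.

Definition is_Schur (k : nat) (M : 'M[R]_k) : Prop :=
  forall z : R[i], eigenvalue (map_mx (real_complex R) M) z -> `|z| < 1.

Variables (n m p : nat) (A : 'M[R]_n) (B : 'M[R]_(n, m)) (C : 'M[R]_(p, n)).

(* O_l = [C; CA; ...; CA^(l-1)] *)
Definition obsmx (l : nat) : 'M[R]_(p * l, n) :=
  \matrix_(i < p * l, j < n) mxget (C *m A ^+ (i %/ p)%N) (i %% p)%N j.

Definition observable : Prop := \rank (obsmx n) = n.

Definition is_obs_index (l : nat) : Prop :=
  \rank (obsmx l) = n /\ forall l', (l' < l)%N -> \rank (obsmx l') <> n.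

Definition toepmx (l : nat) : 'M[R]_(p * l, m * l) :=
  blockmx l (fun i j => if (j < i)%N then C *m A ^+ (i - j - 1) *m B else 0).

(* R_l = [A^(l-1) B ... A B  B] *)
Definition reachmx (l : nat) : 'M[R]_(n, m * l) :=
  \matrix_(i < n, j < m * l) mxget (A ^+ (l - 1 - j %/ m)%N *m B) i (j %% m)%N.

Definition shiftmx (q l : nat) : 'M[R]_(q * l) :=
  blockmx l (fun i j => if j == i.+1 then (1%:M : 'M[R]_q) else 0).

Definition Fmx (l : nat) : 'M[R]_(p * l + m * l) :=
  block_mx (shiftmx p l) 0 0 (shiftmx m l).

Definition Lmx (l : nat) : 'M[R]_(p * l + m * l, p) :=
  col_mx (\matrix_(i < p * l, j < p) ((i : nat) == p * l - p + j)%N%:R) 0.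

Definition Bmx (l : nat) : 'M[R]_(p * l + m * l, m) :=
  col_mx 0 (\matrix_(i < m * l, j < m) ((i : nat) == m * l - m + j)%N%:R).

Definition Zmx (l : nat) (OL : 'M[R]_(n, p * l)) : 'M[R]_(p, p * l + m * l) :=
  row_mx (C *m A ^+ l *m OL)
         (C *m reachmx l - C *m A ^+ l *m OL *m toepmx l).

Definition Amx (l : nat) (OL : 'M[R]_(n, p * l)) : 'M[R]_(p * l + m * l) :=
  Fmx l + Lmx l *m Zmx OL.

Definition closed_loop (l : nat) (K : 'M[R]_(m, p * l + m * l))
  (s : 'cV[R]_(n + (p * l + m * l))) : 'cV[R]_(n + (p * l + m * l)) :=
  let x := usubmx s in
  let chi := dsubmx s in
  let u := K *m chi in
  let y := C *m x in
  col_mx (A *m x + B *m u) (Fmx l *m chi + Lmx l *m y + Bmx l *m u).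

End Defs.

Local Open Scope classical_set_scope.
Definition GAS (R : realType) (V : normedModType R) (f : V -> V) : Prop :=
  f 0 = 0 /\
  (forall eps : R, 0 < eps -> exists2 delta : R, 0 < delta &
     forall s : V, `|s| < delta -> forall k : nat, `|iter k f s| < eps) /\
  (forall s : V, (fun k : nat => iter k f s) @ \oo --> (0 : V)).

(* Main.v *)
Require Import Defs.
From HB Require Import structures.
From mathcomp Require Import all_boot all_order all_algebra.
From mathcomp Require Import all_classical all_reals all_analysis.
From mathcomp Require Import complex.
From mathcomp Require Import zify ring lra.
Import Order.TTheory GRing.Theory Num.Theory.
Import numFieldNormedType.Exports.
Local Open Scope classical_set_scope.
Local Open Scope ring_scope.
Set Implicit Arguments. Unset Strict Implicit. Unset Printing Implicit Defensive.

Section T0.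
Variable R : realType.
Definition t0 (a : nat -> R) := forall e : R, 0 < e -> exists N, forall k, (N <= k)%N -> `|a k| < e.

Lemma t0_cvg (V : normedModType R) (f : nat -> V) :
  f @ \oo --> (0 : V) <-> t0 (fun k => `|f k|).
Proof.
rewrite cvgr0Pnorm_lt; split => H e e0.
  by case: (H e e0) => N _ HN; exists N => k /HN; rewrite normr_id.
by case: (H e e0) => N HN; exists N => // k /HN; rewrite normr_id.
Qed.

Lemma t0_le (a b : nat -> R) : (forall k, `|a k| <= b k) -> t0 b -> t0 a.
Proof.
move=> H Hb e e0; case: (Hb e e0) => N HN; exists N => k /HN.
by apply: le_lt_trans; apply: le_trans (H k) (ler_norm _).
Qed.

Lemma t0D (a b : nat -> R) : t0 a -> t0 b -> t0 (fun k => a k + b k).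
Proof.
move=> Ha Hb e e0; have e2 : 0 < e / 2 by rewrite divr_gt0.
case: (Ha _ e2) => N1 H1; case: (Hb _ e2) => N2 H2; exists (maxn N1 N2) => k Hk.
apply: le_lt_trans (ler_normD _ _) _.
have -> : e = e / 2 + e / 2 by field.
by apply: ltrD; [apply: H1 | apply: H2]; lia.
Qed.

Lemma t0M (c : R) (a : nat -> R) : t0 a -> t0 (fun k => c * a k).
Proof.
move=> Ha e e0; have c1 : 0 < `|c| + 1 by rewrite ltr_pwDr // normr_ge0.
case: (Ha (e / (`|c| + 1))) => [|N HN]; first by rewrite divr_gt0.
exists N => k /HN Hk; rewrite normrM.
apply: (@le_lt_trans _ _ ((`|c| + 1) * `|a k|)).
  by rewrite ler_wpM2r // lerDl.
by rewrite mulrC -ltr_pdivlMr.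
Qed.

Lemma t0_sum (n : nat) (F : 'I_n -> nat -> R) : (forall i, t0 (F i)) ->
  t0 (fun k => \sum_(i < n) F i k).
Proof.
elim: n F => [|n IH] F HF.
  by move=> e e0; exists 0%N => k _; rewrite big_ord0 normr0.
have -> : (fun k => \sum_(i < n.+1) F i k) = (fun k => \sum_(i < n) F (widen_ord (leqnSn n) i) k + F ord_max k).
  by apply: funext => k; rewrite big_ord_recr.
by apply: t0D; [apply: IH => i; apply: HF | apply: HF].
Qed.

Lemma t0_shift (a : nat -> R) d : t0 (fun k => a (k + d)%N) -> t0 a.
Proof.
move=> H e e0; case: (H e e0) => N HN; exists (N + d)%N => k Hk.
have -> : k = ((k - d) + d)%N by lia.
by apply: HN; lia.
Qed.

Lemma t0_geo (c : R) : 0 <= c < 1 -> t0 (fun k => c ^+ k).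
Proof.
case/andP => c0 c1; have := @cvg_expr R c; rewrite ger0_norm // => /(_ c1).
move/t0_cvg; apply: t0_le => k; exact: lexx.
Qed.

Lemma t0_rec (a b : nat -> R) (c : R) : 0 <= c < 1 -> (forall k, 0 <= a k) ->
  (forall k, a k.+1 <= c * a k + b k) -> t0 b -> t0 a.
Proof.
case/andP => c0 c1 a0 Hr Hb e e0.
have e2 : 0 < e / 2 by rewrite divr_gt0.
have ec : 0 < e / 2 * (1 - c) by rewrite mulr_gt0 // subr_gt0.
case: (Hb _ ec) => N HN.
have Hj : forall j, a (N + j)%N <= e / 2 + c ^+ j * a N.
  elim => [|j IH]; first by rewrite addn0 expr0 mul1r lerDr ltW.
  rewrite addnS; apply: le_trans (Hr _) _.
  have Hb' := HN (N + j)%N (leq_addr _ _).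
  have Hb'' : b (N + j)%N <= e / 2 * (1 - c) := le_trans (ler_norm _) (ltW Hb').
  have : c * a (N + j)%N <= c * (e / 2 + c ^+ j * a N) by rewrite ler_wpM2l.
  rewrite exprS; nra.
case: (t0M (a N) (t0_geo (ltac:(by rewrite c0 c1) : 0 <= c < 1)) e2) => M HM.
exists (N + M)%N => k Hk.
have -> : k = (N + (k - N))%N by lia.
rewrite ger0_norm //; apply: le_lt_trans (Hj _) _.
have := HM (k - N)%N ltac:(lia); rewrite mulrC => H.
have := le_lt_trans (ler_norm _) H; lra.
Qed.
End T0.

Section T0.
Variable R : realType.


Definition ct0 n (s : nat -> 'M[R[i]]_n) :=
  forall i j, t0 (fun k => Normc.normc (s k i j)).

Lemma normc_ge0 (z : R[i]) : 0 <= Normc.normc z.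
Proof. by case: z => a b /=; rewrite sqrtr_ge0. Qed.

Lemma crec n (s e : nat -> 'M[R[i]]_n) (z : R[i]) : Normc.normc z < 1 ->
  (forall k, s k.+1 = z *: s k + e k) -> ct0 e -> ct0 s.
Proof.
move=> z1 Hs He i j.
apply: (@t0_rec _ _ (fun k => Normc.normc (e k i j)) (Normc.normc z)) => //.
- by rewrite normc_ge0 z1.
- by move=> k; apply: normc_ge0.
- move=> k; rewrite Hs !mxE.
  apply: le_trans (le_normcD _ _) _.
  by rewrite (Normc.normcM z).
Qed.

Lemma key n (Mc : 'M[R[i]]_n.+1) (r : seq R[i]) :
  (forall z, z \in r -> Normc.normc z < 1) -> forall Q : {poly R[i]},
  ct0 (fun k => horner_mx Mc (Q * \prod_(z <- r) ('X - z%:P)) * Mc ^+ k) ->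
  ct0 (fun k => horner_mx Mc Q * Mc ^+ k).
Proof.
elim: r => [|z r IH] Hr Q.
  by rewrite big_nil mulr1.
rewrite big_cons mulrA => /IH H.
have {}H := H (fun z' Hz' => Hr z' (@mem_behead _ (z :: r) _ Hz')).
apply: (@crec _ _ (fun k => horner_mx Mc (Q * ('X - z%:P)) * Mc ^+ k) z); first by apply: Hr; rewrite mem_head.
  move=> k /=; rewrite rmorphM /= rmorphB /= horner_mx_X horner_mx_C.
  rewrite exprS mulrBr mulrBl mulrA.
  rewrite -[horner_mx Mc Q * z%:M]/(horner_mx Mc Q *m z%:M) mul_mx_scalar scalerAl.
  by rewrite addrC subrK.
exact: H.
Qed.

Lemma schur_pow (N : nat) (M : 'M[R]_N) : is_Schur M ->
  forall i j, t0 (fun k => (M ^+ k) i j).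
Proof.
case: N M => [|N] M HS; first by move=> [].
pose Mc := map_mx (real_complex R) M.
have [r Hr] := closed_field_poly_normal (char_poly Mc).
rewrite (monicP (char_poly_monic Mc)) scale1r in Hr.
have Hz : forall z, z \in r -> Normc.normc z < 1.
  move=> z zr; have : eigenvalue Mc z by rewrite eigenvalue_root_char Hr root_prod_XsubC.
  move/HS; rewrite normc_def; case: z {zr} => a b /=.
  by rewrite ltcR.
have H1 : ct0 (fun k => Mc ^+ k).
  have E : (fun k => Mc ^+ k) = (fun k => horner_mx Mc 1 * Mc ^+ k).
    by apply: funext => k; rewrite rmorph1 mul1r.
  rewrite E; apply: (@key _ Mc r Hz 1).
  rewrite mul1r -Hr Cayley_Hamilton.
  by move=> i' j' e e0; exists 0%N => k _; rewrite mul0r mxE Normc.normc0 normr0.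
move=> i j; have := H1 i j.
have E : (fun k => Normc.normc ((Mc ^+ k) i j)) = (fun k => `|(M ^+ k) i j|).
  apply: funext => k; rewrite /Mc -rmorphXn mxE /=.
  by rewrite expr0n addr0 sqrtr_sqr.
rewrite E => H e e0; case: (H e e0) => N0 HN; exists N0 => k /HN.
by rewrite normr_id.
Qed.
End T0.

Section Arith.
Local Open Scope nat_scope.
Lemma lin_idx i c c' q l : (i < l)%N -> (c < q)%N -> (c' < q)%N -> (i * q + c == q * l - q + c') = ((i.+1 == l) && (c == c')).
Proof.
move=> Hi Hc Hc'.
case: (ltngtP i.+1 l) => H.
- have H2 : (i.+2 * q <= l * q)%N by rewrite leq_mul2r H orbT.
  rewrite /=; apply/eqP => E; nia.
- lia.
- rewrite /=; subst l; apply/eqP/eqP; nia.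
Qed.
Lemma blk_idx i c t c' q : (c < q)%N -> (c' < q)%N -> (i * q + c == t * q + c') = ((i == t) && (c == c')).
Proof.
move=> Hc Hc'.
case: (ltngtP i t) => H.
- have H2 : (i.+1 * q <= t * q)%N by rewrite leq_mul2r H orbT.
  rewrite /=; apply/eqP => E; nia.
- have H2 : (t.+1 * q <= i * q)%N by rewrite leq_mul2r H orbT.
  rewrite /=; apply/eqP => E; nia.
- rewrite /=; subst t; apply/eqP/eqP; lia.
Qed.
End Arith.

Section MG.
Variable R : realType.

Lemma mg_ord P Q (M : 'M[R]_(P, Q)) (i : 'I_P) (j : 'I_Q) : mxget M i j = M i j.
Proof.
rewrite /mxget; case: insubP => [i' _ Ei|]; last by rewrite ltn_ord.
case: insubP => [j' _ Ej|]; last by rewrite ltn_ord.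
by congr (M _ _); apply: val_inj.
Qed.

Lemma mg_outr P Q (M : 'M[R]_(P, Q)) r c : ~~ (r < P)%N -> mxget M r c = 0.
Proof. by move=> H; rewrite /mxget insubN. Qed.

Lemma mg_outc P Q (M : 'M[R]_(P, Q)) r c : ~~ (c < Q)%N -> mxget M r c = 0.
Proof. by move=> H; rewrite /mxget; case: insub => // ?; rewrite insubN. Qed.

Lemma mg_in P Q (M : 'M[R]_(P, Q)) r c (Hr : (r < P)%N) (Hc : (c < Q)%N) :
  mxget M r c = M (Ordinal Hr) (Ordinal Hc).
Proof. by rewrite -mg_ord. Qed.

Lemma mg_matrix P Q (E : 'I_P -> 'I_Q -> R) r c (Hr : (r < P)%N) (Hc : (c < Q)%N) :
  mxget (\matrix_(i, j) E i j) r c = E (Ordinal Hr) (Ordinal Hc).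
Proof. by rewrite mg_in mxE. Qed.

Lemma mg_add P Q (M N : 'M[R]_(P, Q)) r c : mxget (M + N) r c = mxget M r c + mxget N r c.
Proof.
case: (ltnP r P) => Hr; last by rewrite !mg_outr ?addr0 // -leqNgt.
case: (ltnP c Q) => Hc; last by rewrite !mg_outc ?addr0 // -leqNgt.
by rewrite !(mg_in _ Hr Hc) mxE.
Qed.

Lemma mg_opp P Q (M : 'M[R]_(P, Q)) r c : mxget (- M) r c = - mxget M r c.
Proof.
case: (ltnP r P) => Hr; last by rewrite !mg_outr ?oppr0 // -leqNgt.
case: (ltnP c Q) => Hc; last by rewrite !mg_outc ?oppr0 // -leqNgt.
by rewrite !(mg_in _ Hr Hc) mxE.
Qed.

Lemma mg0 P Q r c : mxget (0 : 'M[R]_(P, Q)) r c = 0.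
Proof.
case: (ltnP r P) => Hr; last by rewrite !mg_outr // -leqNgt.
case: (ltnP c Q) => Hc; last by rewrite !mg_outc // -leqNgt.
by rewrite !(mg_in _ Hr Hc) mxE.
Qed.

Lemma mg_mul P Q S (M : 'M[R]_(P, Q)) (N : 'M[R]_(Q, S)) r c :
  mxget (M *m N) r c = \sum_(j < Q) mxget M r j * mxget N j c.
Proof.
case: (ltnP r P) => Hr; last by rewrite mg_outr -?leqNgt // big1 // => j _; rewrite mg_outr ?mul0r // -leqNgt.
case: (ltnP c S) => Hc; last by rewrite mg_outc -?leqNgt // big1 // => j _; rewrite (@mg_outc _ _ N) ?mulr0 // -leqNgt.
by rewrite (mg_in _ Hr Hc) mxE; apply: eq_bigr => j _; rewrite -!mg_ord.
Qed.

Lemma mg_scalar Q (a : R) r c : (r < Q)%N -> (c < Q)%N ->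
  mxget (a%:M : 'M[R]_Q) r c = a *+ (r == c).
Proof.
by move=> Hr Hc; rewrite (mg_in _ Hr Hc) mxE.
Qed.

Lemma mg_col P1 P2 Q (U : 'M[R]_(P1, Q)) (D : 'M[R]_(P2, Q)) r c :
  mxget (col_mx U D) r c = if (r < P1)%N then mxget U r c else mxget D (r - P1) c.
Proof.
case: (ltnP c Q) => Hc; last by rewrite !mg_outc -?leqNgt //; case: ifP.
case: (ltnP r P1) => Hr.
  have Hr' : (r < P1 + P2)%N by apply: leq_trans Hr (leq_addr _ _).
  rewrite (mg_in _ Hr' Hc) (mg_in _ Hr Hc).
  by rewrite (_ : Ordinal Hr' = lshift P2 (Ordinal Hr)) ?col_mxEu //; apply: val_inj.
case: (ltnP r (P1 + P2)) => Hr2; last first.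
  by rewrite !mg_outr // -leqNgt; lia.
have Hr' : (r - P1 < P2)%N by rewrite ltn_subLR.
rewrite (mg_in _ Hr2 Hc) (mg_in _ Hr' Hc).
by rewrite (_ : Ordinal Hr2 = rshift P1 (Ordinal Hr')) ?col_mxEd //; apply: val_inj => /=; rewrite subnKC.
Qed.

Lemma mg_row P Q1 Q2 (Lm : 'M[R]_(P, Q1)) (Rm : 'M[R]_(P, Q2)) r c :
  mxget (row_mx Lm Rm) r c = if (c < Q1)%N then mxget Lm r c else mxget Rm r (c - Q1).
Proof.
case: (ltnP r P) => Hr; last by rewrite !mg_outr -?leqNgt //; case: ifP.
case: (ltnP c Q1) => Hc.
  have Hc' : (c < Q1 + Q2)%N by apply: leq_trans Hc (leq_addr _ _).
  rewrite (mg_in _ Hr Hc') (mg_in _ Hr Hc).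
  by rewrite (_ : Ordinal Hc' = lshift Q2 (Ordinal Hc)) ?row_mxEl //; apply: val_inj.
case: (ltnP c (Q1 + Q2)) => Hc2; last first.
  by rewrite !mg_outc // -leqNgt; lia.
have Hc' : (c - Q1 < Q2)%N by rewrite ltn_subLR.
rewrite (mg_in _ Hr Hc2) (mg_in _ Hr Hc').
by rewrite (_ : Ordinal Hc2 = rshift Q1 (Ordinal Hc')) ?row_mxEr //; apply: val_inj => /=; rewrite subnKC.
Qed.

Lemma sum_blocks (q l : nat) (F : nat -> R) :
  \sum_(j < q * l) F j = \sum_(t < l) \sum_(c < q) F (t * q + c)%N.
Proof.
elim: l => [|l IH]; first by rewrite muln0 !big_ord0.
rewrite big_ord_recr /= -IH.
rewrite -!(big_mkord xpredT) mulnS addnC.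
rewrite (big_cat_nat _ (leq_addr _ _)) //=; congr (_ + _).
rewrite -[X in \sum_(X <= _ < _) _](add0n (q * l)) big_addn addKn big_mkord.
by apply: eq_bigr => c _; rewrite addnC mulnC.
Qed.

Lemma sum_ind (n a : nat) (F : nat -> R) :
  \sum_(t < n) ((t : nat) == a)%:R * F t = if (a < n)%N then F a else 0.
Proof.
case: ifP => Ha.
  rewrite (bigD1 (Ordinal Ha)) //= eqxx mul1r big1 ?addr0 // => j Hj.
  suff -> : ((j : nat) == a) = false by rewrite mul0r.
  by apply/negbTE; apply: contra Hj => /eqP E; apply/eqP; apply: val_inj.
rewrite big1 // => j _; suff -> : ((j : nat) == a) = false by rewrite mul0r.
by apply/negbTE; apply: contraFN Ha => /eqP <-.
Qed.

Lemma mxP_nat P (v w : 'M[R]_(P, 1)) : (forall r, (r < P)%N -> mxget v r 0 = mxget w r 0) -> v = w.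
Proof.
move=> H; apply/matrixP => i j; rewrite (ord1 j) -!mg_ord; exact: H.
Qed.

Lemma mxP_blk q l (v w : 'M[R]_(q * l, 1)) :
  (forall i c : nat, (i < l)%N -> (c < q)%N -> mxget v (i * q + c)%N 0 = mxget w (i * q + c)%N 0) -> v = w.
Proof.
move=> H; apply: mxP_nat => r Hr.
have q0 : (0 < q)%N by move: Hr; case: (q) => //; rewrite mul0n.
rewrite (divn_eq r q); apply: H; last by rewrite ltn_mod.
by rewrite ltn_divLR // mulnC.
Qed.

Lemma mg_blockmx p q l (Blk : nat -> nat -> 'M[R]_(p, q)) i c t c' :
  (i < l)%N -> (c < p)%N -> (t < l)%N -> (c' < q)%N ->
  mxget (blockmx l Blk) (i * p + c) (t * q + c') = mxget (Blk i t) c c'.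
Proof.
move=> Hi Hc Ht Hc'.
have H1 : (i * p + c < p * l)%N.
  have : (i.+1 * p <= l * p)%N by rewrite leq_mul2r Hi orbT.
  rewrite mulSn; lia.
have H2 : (t * q + c' < q * l)%N.
  have : (t.+1 * q <= l * q)%N by rewrite leq_mul2r Ht orbT.
  rewrite mulSn; lia.
rewrite (mg_matrix _ H1 H2) /=.
have p0 : (0 < p)%N by lia.
have q0 : (0 < q)%N by lia.
by rewrite !divnMDl // !divn_small // !addn0 !modnMDl !modn_small.
Qed.
End MG.

Section Reg.
Variable R : realType.
Variable l : nat.

Definition Lin (q : nat) : 'M[R]_(q * l, q) :=
  \matrix_(i < q * l, j < q) ((i : nat) == q * l - q + j)%N%:R.

Lemma mg_sum P Q (I : finType) (F : I -> 'M[R]_(P, Q)) r c :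
  mxget (\sum_i F i) r c = \sum_i mxget (F i) r c.
Proof.
elim/big_rec2: _ => [|i a b _ H]; first by rewrite mg0.
by rewrite mg_add H.
Qed.

Lemma mg_shift q (v : 'cV[R]_(q * l)) i c : (i < l)%N -> (c < q)%N ->
  mxget (shiftmx R q l *m v) (i * q + c)%N 0 =
  if (i.+1 < l)%N then mxget v (i.+1 * q + c)%N 0 else 0.
Proof.
move=> Hi Hc; rewrite mg_mul (sum_blocks q l (fun j => mxget (shiftmx R q l) (i * q + c)%N j * mxget v j 0)).
have E : forall (t : 'I_l) (c' : 'I_q), mxget (shiftmx R q l) (i * q + c)%N (t * q + c')%N * mxget v (t * q + c')%N 0
   = ((t : nat) == i.+1)%:R * (((c' : nat) == c)%:R * mxget v (t * q + c')%N 0).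
  move=> t c'; rewrite /shiftmx mg_blockmx ?ltn_ord //; case: eqP => _.
    by rewrite mg_scalar // mul1r eq_sym.
  by rewrite (mg_in _ Hc (ltn_ord c')) mxE !mul0r.
under eq_bigr => t _ do under eq_bigr => c' _ do rewrite E.
under eq_bigr => t _ do rewrite -mulr_sumr (sum_ind q c (fun c' => mxget v (t * q + c')%N 0)) Hc.
by rewrite (sum_ind _ _ (fun t => mxget v (t * q + c)%N 0)).
Qed.

Lemma mg_lin q (y : 'cV[R]_q) i c : (i < l)%N -> (c < q)%N ->
  mxget (Lin q *m y) (i * q + c)%N 0 = if (i.+1 == l) then mxget y c 0 else 0.
Proof.
move=> Hi Hc; rewrite mg_mul.
have H1 : (i * q + c < q * l)%N.
  have : (i.+1 * q <= l * q)%N by rewrite leq_mul2r Hi orbT.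
  rewrite mulSn; lia.
have E : forall j : 'I_q, mxget (Lin q) (i * q + c)%N j * mxget y j 0 =
   (i.+1 == l)%:R * (((j : nat) == c)%:R * mxget y j 0).
  move=> j; rewrite /Lin (mg_matrix _ H1 (ltn_ord j)) /= lin_idx // (eq_sym c).
  by case: (i.+1 == l); case: (_ == _); rewrite /= ?mul1r ?mul0r ?mulr1 ?mulr0.
under eq_bigr => j _ do rewrite E.
rewrite -mulr_sumr (sum_ind _ _ (fun j => mxget y j 0)) Hc.
by case: (i.+1 == l); rewrite ?mul1r ?mul0r.
Qed.

Lemma reg_lemma q (reg : nat -> 'cV[R]_(q * l)) (w : nat -> 'cV[R]_q) :
  (forall k, reg k.+1 = shiftmx R q l *m reg k + Lin q *m w k) ->
  forall k i c, (i < l)%N -> (c < q)%N ->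
  mxget (reg k) (i * q + c)%N 0 =
  if (l <= i + k)%N then mxget (w (k + i - l)%N) c 0 else mxget (reg 0%N) ((i + k) * q + c)%N 0.
Proof.
move=> Hs; elim => [|k IH] i c Hi Hc.
  by rewrite addn0 leqNgt Hi.
rewrite Hs mg_add mg_shift // mg_lin //.
case: (ltngtP i.+1 l) => H.
- rewrite addr0 IH // (_ : (i.+1 + k)%N = (i + k.+1)%N) ?addSnnS //.
- exfalso; lia.
- rewrite add0r (_ : (l <= i + k.+1)%N = true); last by apply/idP; lia.
  by congr (mxget (w _) _ _); lia.
Qed.

Lemma reg_late q (reg : nat -> 'cV[R]_(q * l)) (w : nat -> 'cV[R]_q) :
  (forall k, reg k.+1 = shiftmx R q l *m reg k + Lin q *m w k) ->
  forall k i c, (l <= k)%N -> (i < l)%N -> (c < q)%N ->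
  mxget (reg k) (i * q + c)%N 0 = mxget (w (k - l + i)%N) c 0.
Proof.
move=> Hs k i c Hk Hi Hc; rewrite (reg_lemma Hs) // ifT; last by lia.
by congr (mxget (w _) _ _); lia.
Qed.
End Reg.

Section Sys.
Variables (R : realType) (n m p : nat) (A : 'M[R]_n) (B : 'M[R]_(n, m)) (C : 'M[R]_(p, n)) (l : nat)
  (OL : 'M[R]_(n, p * l)) (K : 'M[R]_(m, p * l + m * l)).

Let f := closed_loop A B C K.
Definition traj s k := iter k f s.
Definition xs s k := usubmx (traj s k).
Definition ch s k := dsubmx (traj s k).
Definition Ys s k := usubmx (ch s k).
Definition Us s k := dsubmx (ch s k).
Definition us s k := K *m ch s k.

Lemma xS s k : xs s k.+1 = A *m xs s k + B *m us s k.
Proof. by rewrite /xs /traj iterS /f /closed_loop col_mxKu. Qed.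

Lemma chS s k : ch s k.+1 = Fmx R m p l *m ch s k + Lmx R m p l *m (C *m xs s k) + Bmx R m p l *m us s k.
Proof. by rewrite /ch /traj iterS /f /closed_loop col_mxKd. Qed.

Lemma YS s k : Ys s k.+1 = shiftmx R p l *m Ys s k + Lin R l p *m (C *m xs s k).
Proof.
rewrite /Ys chS /Fmx /Lmx /Bmx -{1}(vsubmxK (ch s k)) mul_block_col !mul_col_mx.
by rewrite !add_col_mx col_mxKu !mul0mx !addr0.
Qed.

Lemma US s k : Us s k.+1 = shiftmx R m l *m Us s k + Lin R l m *m us s k.
Proof.
rewrite /Us chS /Fmx /Lmx /Bmx -{1}(vsubmxK (ch s k)) mul_block_col !mul_col_mx.
by rewrite !add_col_mx col_mxKd !mul0mx ?mulmx0 ?addr0 ?add0r.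
Qed.

Lemma mxexpS q (M : 'M[R]_q) k : M *m M ^+ k = M ^+ k.+1.
Proof. by rewrite exprS. Qed.

Lemma traj_formula s a i : xs s (a + i) =
  A ^+ i *m xs s a + \sum_(t < i) A ^+ (i - 1 - t) *m B *m us s (a + t)%N.
Proof.
elim: i => [|i IH]; first by rewrite addn0 expr0 mul1mx big_ord0 addr0.
rewrite addnS xS IH big_ord_recr /= mulmxDr mulmx_sumr mulmxA addrA; congr (_ + _ + _).
- by rewrite mxexpS.
- apply: eq_bigr => t _; rewrite !mulmxA mxexpS.
  by have -> : ((i - 1 - t).+1 = i.+1 - 1 - t)%N by have := ltn_ord t; lia.
- by rewrite subn1 /= subnn expr0 mul1mx.
Qed.

Lemma Y_late s k i c : (l <= k)%N -> (i < l)%N -> (c < p)%N ->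
  mxget (Ys s k) (i * p + c)%N 0 = mxget (C *m xs s (k - l + i)%N) c 0.
Proof. exact: (reg_late (YS s)). Qed.

Lemma U_late s k i c : (l <= k)%N -> (i < l)%N -> (c < m)%N ->
  mxget (Us s k) (i * m + c)%N 0 = mxget (us s (k - l + i)%N) c 0.
Proof. exact: (reg_late (US s)). Qed.

Lemma lt_blk i c q : (i < l)%N -> (c < q)%N -> (i * q + c < q * l)%N.
Proof.
move=> Hi Hc; have : (i.+1 * q <= l * q)%N by rewrite leq_mul2r Hi orbT.
rewrite mulSn; lia.
Qed.

Lemma obs_e i c j : (i < l)%N -> (c < p)%N -> (j < n)%N ->
  mxget (obsmx A C l) (i * p + c)%N j = mxget (C *m A ^+ i) c j.
Proof.
move=> Hi Hc Hj; rewrite /obsmx (mg_matrix _ (lt_blk Hi Hc) Hj) /=.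
have p0 : (0 < p)%N by lia.
by rewrite divnMDl // divn_small // addn0 modnMDl modn_small.
Qed.

Lemma reach_e r t c : (r < n)%N -> (t < l)%N -> (c < m)%N ->
  mxget (reachmx A B l) r (t * m + c)%N = mxget (A ^+ (l - 1 - t) *m B) r c.
Proof.
move=> Hr Ht Hc; rewrite /reachmx (mg_matrix _ Hr (lt_blk Ht Hc)) /=.
have m0 : (0 < m)%N by lia.
by rewrite divnMDl // divn_small // addn0 modnMDl modn_small.
Qed.

Lemma x_id s k : (l <= k)%N ->
  xs s k = A ^+ l *m xs s (k - l) + reachmx A B l *m Us s k.
Proof.
move=> Hk; rewrite -{1}(subnK Hk) traj_formula; congr (_ + _).
apply: mxP_nat => r Hr; rewrite mg_sum mg_mul.
rewrite (sum_blocks m l (fun j => mxget (reachmx A B l) r j * mxget (Us s k) j 0)).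
apply: eq_bigr => t _; rewrite mg_mul; apply: eq_bigr => c _.
by rewrite reach_e ?ltn_ord // U_late ?ltn_ord.
Qed.

Lemma Y_id s k : (l <= k)%N ->
  Ys s k = obsmx A C l *m xs s (k - l) + toepmx A B C l *m Us s k.
Proof.
move=> Hk; apply: mxP_blk => i c Hi Hc.
rewrite Y_late // traj_formula mulmxDr mulmx_sumr !mg_add mg_sum; congr (_ + _).
  rewrite mulmxA !mg_mul; apply: eq_bigr => j _.
  by rewrite obs_e ?ltn_ord.
rewrite mg_mul.
rewrite (sum_blocks m l (fun j => mxget (toepmx A B C l) (i * p + c)%N j * mxget (Us s k) j 0)).
rewrite (big_ord_widen l (fun t => mxget (C *m (A ^+ (i - 1 - t) *m B *m us s (k - l + t)%N)) c 0) (ltnW Hi)).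
rewrite big_mkcond; apply: eq_bigr => t _.
under eq_bigr => c' _ do rewrite /toepmx mg_blockmx ?ltn_ord // U_late ?ltn_ord //.
case: ifP => Hti.
  rewrite (_ : (i - 1 - t = i - t - 1)%N); last by lia.
  have -> : C *m (A ^+ (i - t - 1) *m B *m us s (k - l + t)) = C *m A ^+ (i - t - 1) *m B *m us s (k - l + t)
    by rewrite !mulmxA.
  by rewrite mg_mul.
by rewrite big1 // => c' _; rewrite (mg_in _ Hc (ltn_ord c')) mxE mul0r.
Qed.

Definition Wm := row_mx (A ^+ l *m OL) (reachmx A B l - A ^+ l *m OL *m toepmx A B C l).
Definition Mcl := (Amx A B C OL + Bmx R m p l *m K).

Lemma alg_id q1 q2 (X : 'M[R]_n) (P : 'M[R]_(n, q1)) (O : 'M[R]_(q1, n)) (T : 'M[R]_(q1, q2))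
  (Rc : 'M[R]_(n, q2)) (x0 : 'cV[R]_n) (U : 'cV[R]_q2) : P *m O = 1%:M ->
  X *m P *m (O *m x0 + T *m U) + (Rc - X *m P *m T) *m U = X *m x0 + Rc *m U.
Proof.
move=> H; rewrite mulmxDr mulmxBl !mulmxA -(mulmxA X P O) H mulmx1.
by rewrite -addrA (addrC (X *m P *m T *m U)) subrK.
Qed.

Lemma W_chi (HOL : OL *m obsmx A C l = 1%:M) s k : (l <= k)%N -> Wm *m ch s k = xs s k.
Proof.
move=> Hk; rewrite -(vsubmxK (ch s k)) mul_row_col -/(Ys s k) -/(Us s k).
by rewrite x_id // Y_id // alg_id.
Qed.

Lemma Zeq : Zmx A B C OL = C *m Wm.
Proof. by rewrite /Zmx /Wm mul_mx_row mulmxBr !mulmxA. Qed.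

Lemma ch_step (HOL : OL *m obsmx A C l = 1%:M) s k : (l <= k)%N -> ch s k.+1 = Mcl *m ch s k.
Proof.
move=> Hk; rewrite chS -(@W_chi HOL s k Hk) (mulmxA C Wm) -Zeq /Mcl /Amx /us !mulmxDl !mulmxA.
by [].
Qed.

Lemma ch_iter (HOL : OL *m obsmx A C l = 1%:M) s j : ch s (l + j) = Mcl ^+ j *m ch s l.
Proof.
elim: j => [|j IH]; first by rewrite addn0 expr0 mul1mx.
by rewrite addnS ch_step ?leq_addr // IH mulmxA mxexpS.
Qed.

Lemma traj_iter (HOL : OL *m obsmx A C l = 1%:M) s j :
  traj s (l + j) = col_mx Wm 1%:M *m (Mcl ^+ j *m ch s l).
Proof.
rewrite -(vsubmxK (traj s (l + j))) -/(xs s (l + j)) -/(ch s (l + j)).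
by rewrite mul_col_mx mul1mx -(@W_chi HOL s _ (leq_addr _ _)) ch_iter.
Qed.

Definition Phi := block_mx A (B *m K) (Lmx R m p l *m C) (Fmx R m p l + Bmx R m p l *m K).

Lemma f_lin s : f s = Phi *m s.
Proof.
rewrite /f /closed_loop -[s in RHS]vsubmxK /Phi mul_block_col mulmxDl !mulmxA.
congr col_mx; by rewrite -addrA addrCA.
Qed.

Lemma traj_lin s k : traj s k = Phi ^+ k *m s.
Proof.
elim: k => [|k IH]; first by rewrite expr0 mul1mx.
by rewrite /traj iterS -/(traj s k) f_lin IH mulmxA mxexpS.
Qed.
End Sys.

Section Fin.
Variable R : realType.

Lemma mxnorm_le a b (M : 'M[R]_(a, b)) (x : R) : 0 <= x -> (forall i j, `|M i j| <= x) -> `|M| <= x.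
Proof.
move=> x0 H; rewrite [`|M|]/Num.norm /= mx_normrE.
by apply: bigmax_le => // ij _; apply: H.
Qed.

Lemma entry_le_norm a b (M : 'M[R]_(a, b)) i j : `|M i j| <= `|M|.
Proof.
rewrite [`|M|]/Num.norm /= mx_normrE.
exact: (le_bigmax _ (fun ij : 'I_a * 'I_b => `|M ij.1 ij.2|) (i, j)).
Qed.

Lemma sum2_ge a b (F : 'I_a -> 'I_b -> R) i j : (forall i j, 0 <= F i j) ->
  F i j <= \sum_i \sum_j F i j.
Proof.
move=> H; rewrite (bigD1 i) //= (bigD1 j) //= -addrA lerDl.
by rewrite addr_ge0 // sumr_ge0 // => i' _; rewrite sumr_ge0.
Qed.

Lemma mxnorm_sum a b (M : 'M[R]_(a, b)) : `|M| <= \sum_i \sum_j `|M i j|.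
Proof.
apply: mxnorm_le; first by rewrite sumr_ge0 // => i _; rewrite sumr_ge0.
by move=> i j; exact: (@sum2_ge a b (fun i j => `|M i j|) i j (fun _ _ => normr_ge0 _)).
Qed.

Lemma t0_abs (x : nat -> R) : t0 x -> t0 (fun k => `|x k|).
Proof. by move=> H e e0; case: (H e e0) => N HN; exists N => k /HN; rewrite normr_id. Qed.

Lemma t0_mx a b (M : nat -> 'M[R]_(a, b)) : (forall i j, t0 (fun k => M k i j)) ->
  t0 (fun k => `|M k|).
Proof.
move=> H; apply: (t0_le (b := fun k => \sum_i \sum_j `|M k i j|)).
  by move=> k; rewrite normr_id mxnorm_sum.
by apply: t0_sum => i; apply: t0_sum => j; apply: t0_abs.
Qed.

Lemma t0_bounded (x : nat -> R) : t0 x -> exists2 b, 0 <= b & forall k, `|x k| <= b.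
Proof.
move=> H; case: (H 1 ltr01) => N HN.
exists (1 + \sum_(k < N) `|x k|); first by rewrite addr_ge0 // sumr_ge0.
move=> k; case: (ltnP k N) => Hk.
  have H1 : `|x k| <= \sum_(k < N) `|x k|.
    by rewrite (bigD1 (Ordinal Hk)) //= lerDl sumr_ge0.
  by apply: le_trans H1 _; rewrite lerDr ler01.
by apply: le_trans (ltW (HN _ Hk)) _; rewrite lerDl sumr_ge0.
Qed.
End Fin.

Theorem lemma8 (R : realType) (n m p : nat)
  (A : 'M[R]_n) (B : 'M[R]_(n, m)) (C : 'M[R]_(p, n)) (l : nat)
  (OL : 'M[R]_(n, p * l)) (K : 'M[R]_(m, p * l + m * l)) :
  observable A C ->
  is_obs_index A C l ->
  OL *m obsmx A C l = 1%:M ->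
  is_Schur ((Amx A B C OL + Bmx R m p l *m K : 'M[R]_(p * l + m * l))) ->
  GAS (closed_loop A B C K).
Proof.
move=> _ _ HOL HS.
have HM := schur_pow HS.
have Htr : forall s r, t0 (fun k => traj A B C K s k r 0).
  move=> s r; apply: (@t0_shift _ _ l).
  set G := col_mx (Wm A B C OL) 1%:M.
  set v := ch A B C K s l.
  have E : (fun k => traj A B C K s (k + l) r 0) =
    (fun k => \sum_a \sum_b (G r a * v b 0) * ((Mcl A B C OL K) ^+ k) a b).
    apply: funext => k; rewrite (addnC k l) (traj_iter B K HOL) mxE.
    apply: eq_bigr => a _; rewrite [(_ *m _) a 0]mxE mulr_sumr; apply: eq_bigr => b _.
    rewrite /G /v; ring.
  rewrite E; apply: t0_sum => a; apply: t0_sum => b; apply: t0M; exact: HM.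
have HP : forall i j, t0 (fun k => ((Phi A B C K) ^+ k) i j).
  move=> i j; have := t0_abs (Htr (delta_mx j 0) i); apply: t0_le => k.
  by rewrite traj_lin -colE !mxE.
have HS2 : t0 (fun k => \sum_i \sum_j `|(Phi A B C K ^+ k) i j|).
  by apply: t0_sum => i; apply: t0_sum => j; apply: t0_abs.
have [b b0 Hb] := t0_bounded HS2.
have Hbnd : forall s k, `|iter k (closed_loop A B C K) s| <= b * `|s|.
  move=> s k; rewrite -/(traj A B C K s k) traj_lin.
  apply: mxnorm_le; first by rewrite mulr_ge0.
  move=> i j; rewrite (ord1 j) mxE.
  apply: le_trans (ler_norm_sum _ _ _) _.
  apply: (@le_trans _ _ (\sum_j0 `|(Phi A B C K ^+ k) i j0| * `|s|)).
    by apply: ler_sum => j0 _; rewrite normrM ler_wpM2l // entry_le_norm.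
  rewrite -mulr_suml ler_wpM2r //.
  apply: le_trans _ (le_trans (ler_norm _) (Hb k)).
  rewrite [X in _ <= X](bigD1 i) //= lerDl.
  by rewrite sumr_ge0 // => i' _; rewrite sumr_ge0.
split; first by rewrite f_lin mulmx0.
split.
  move=> eps eps0; exists (eps / (b + 1)); first by rewrite divr_gt0 // ltr_wpDl.
  move=> s Hs k; apply: le_lt_trans (Hbnd s k) _.
  have b1 : 0 < b + 1 by rewrite ltr_wpDl.
  apply: (@le_lt_trans _ _ (b * (eps / (b + 1)))); first by rewrite ler_wpM2l // ltW.
  rewrite mulrA ltr_pdivrMr //; nra.
move=> s; apply/t0_cvg.
apply: (t0_mx (M := fun k => iter k (closed_loop A B C K) s)) => i j.
by rewrite (ord1 j); apply: Htr.
Qed.
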